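(* Let $X$, $Y$ be normed vector spaces, let $f\colon X\to Y$ be continuously open at $x^*\in X$, and let $K$ be a compact neighborhood of $x^*$. Then $$\sup_{x\in K}\|f(x)\|\ \ge\ \|f(x^* )\|+\Gamma_{f(x^* )}\Big(f\big(\mathbb{B}_{\Gamma_{x^*}(K)}(x^* )\big)\Big).$$
   Context: $\mathbb{B}_r(x)$ denotes the open ball of radius $r$ centered at $x$. For metric spaces $X,Y$ and $x\in X$, $f$ is continuously open at $x$ if there is a continuous, positive definite (i.e. $g(0)=0$, $g(r)>0$ for $r>0$), monotonically increasing function $g$ with $\mathbb{B}_{g(r)}(f(x))\subseteq f(\mathbb{B}_r(x))$ for all sufficiently small $r>0$. For a normed space $Z$, $z^*\in Z$ and $K\subseteq Z$, the inradius of $K$ at $z^*$ is $\Gamma_{z^*}(K)=\sup\{r\ge0:\mathbb{B}_r(z^* )\subseteq K\}$. *)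

(* Defs.v *)
From HB Require Import structures.
From mathcomp Require Import all_boot all_order all_algebra.
From mathcomp Require Import all_classical all_reals all_analysis.
Set Implicit Arguments. Unset Strict Implicit. Unset Printing Implicit Defensive.
Import Order.TTheory GRing.Theory Num.Theory.
Import numFieldNormedType.Exports.
Local Open Scope classical_set_scope.
Local Open Scope ring_scope.

(* Open ball B_r(x) = {y | ||x - y|| < r} with an extended-real radius
   (needed because an inradius may be +oo). For finite r this is [ball x r]. *)
Definition eball (R : realType) (V : normedModType R) (x : V) (r : \bar R)
  : set V := [set y | ((`|x - y|)%:E < r)%E].

Definition inradius (R : realType) (V : normedModType R) (z : V) (K : set V)
  : \bar R := ereal_sup [set r%:E | r in [set r : R | 0 <= r /\ ball z r `<=` K]].

Definition continuously_open_at (R : realType) (X Y : normedModType R)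
  (f : X -> Y) (x : X) : Prop :=
  exists g : R -> R,
    [/\ continuous g, g 0 = 0, (forall r, 0 < r -> 0 < g r),
        {homo g : a b / a <= b} &
        exists2 delta : R, 0 < delta &
          forall r, 0 < r -> r < delta -> ball (f x) (g r) `<=` f @` ball x r].

(* Main.v *)
Require Import Defs.
From HB Require Import structures.
From mathcomp Require Import all_boot all_order all_algebra.
From mathcomp Require Import all_classical all_reals all_analysis.
From mathcomp Require Import lra.
Import Order.TTheory GRing.Theory Num.Theory.
Import numFieldNormedType.Exports.
Local Open Scope classical_set_scope.
Local Open Scope ring_scope.

Lemma ballN (R : realType) (V : normedModType R) (x y : V) (r : R) :
  ball x r y <-> `|x - y| < r.
Proof. by rewrite -ball_normE. Qed.

Theorem corollary1 (R : realType) (X Y : normedModType R) (f : X -> Y)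
  (xs : X) (K : set X)
  (hY : exists y : Y, y != 0)
  (hf : continuously_open_at f xs)
  (hKc : compact K) (hKn : nbhs xs K) :
  (ereal_sup [set (`|f x|)%:E | x in K] >=
   (`|f xs|)%:E + inradius (f xs) (f @` eball xs (inradius xs K)))%E.
Proof.
set S := ereal_sup _.
set a := `|f xs|.
have xsK : K xs by apply: nbhs_singleton.
have aS : (a%:E <= S)%E by apply: ereal_sup_ubound; exists xs.
have eK : eball xs (inradius xs K) `<=` K.
  move=> y; rewrite /eball /= => /ereal_sup_gt [_ [r [r0 brK] <-]].
  rewrite lte_fin => hr; apply: brK; exact/ballN.
rewrite addeC -leeBrDr //.
apply: ge_ereal_sup => _ [r [r0 hb] <-].
rewrite leeBrDr // -EFinD addrC.
case: (ler0P r) => [r00|rpos].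
  have -> : r = 0 by apply/eqP; rewrite eq_le r00 r0.
  by rewrite addr0.
case: hY => y y0.
set u : Y := if f xs == 0 then `|y|^-1 *: y else a^-1 *: f xs.
have nu : `|u| = 1.
  rewrite /u; case: ifP => [_|].
    by rewrite normrZ ger0_norm ?invr_ge0 // ?mulVf ?normr_id ?mulVf // normr_eq0.
  by move/negbT=> h; rewrite /a normrZ ger0_norm ?invr_ge0 // mulVf // normr_eq0.
have fu : f xs = a *: u.
  rewrite /u; case: ifP => [/eqP h|/negbT h]; first by rewrite /a h normr0 scale0r.
  by rewrite scalerA mulfV ?scale1r // /a normr_eq0.
have key : forall s, 0 < s -> s < r -> ((a + s)%:E <= S)%E.
  move=> s s0 sr.
  have : ball (f xs) r ((a + s) *: u).
    apply/ballN; rewrite fu -scalerBl normrZ nu mulr1.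
    have -> : a - (a + s) = - s by rewrite opprD addrA subrr add0r.
    by rewrite normrN gtr0_norm.
  move/hb => [x /eK xK fx].
  apply: ereal_sup_ubound; exists x => //.
  rewrite fx normrZ nu mulr1 ger0_norm //; apply: addr_ge0; [exact: normr_ge0 | exact: ltW].
clearbody S; move: aS; case: S key => [m| |] key aS //; last by rewrite leey.
rewrite lee_fin; apply/negPn/negP; rewrite -ltNge => hm.
rewrite lee_fin in aS.
have hs1 : 0 < (m - a + r) / 2 by lra.
have hs2 : (m - a + r) / 2 < r by lra.
have := key _ hs1 hs2; rewrite lee_fin; lra.
Qed.
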